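(* Let $X$ be a proper geodesic metric space and let $g:X\to X$ be an isometry of infinite order such that the cyclic group $\langle g\rangle$ acts properly on $X$. Then $g$ has at most two fixed points on $\partial_M X$.
   Context: A Morse gauge is a function $N:[1,\infty)\times[0,\infty)\to[0,\infty)$; a geodesic $\gamma$ is $N$-Morse if every $(\lambda,\epsilon)$-quasi-geodesic with endpoints on $\gamma$ lies in the $N(\lambda,\epsilon)$-neighborhood of $\gamma$. The Morse boundary $\partial_M X$ is the set of Morse geodesic rays in $X$ modulo finite Hausdorff distance; an isometry $g$ acts on it by $[\alpha]\mapsto[g\circ\alpha]$. *)

(* Defs.v *)
From Stdlib Require Import Reals List Lra.
Open Scope R_scope.

Section MetricDefs.
Context {X : Type} (d : X -> X -> R).

Definition is_metric : Prop :=
  (forall x y, d x y = 0 <-> x = y) /\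
  (forall x y, d x y = d y x) /\
  (forall x y z, d x z <= d x y + d y z).

Definition mopen (U : X -> Prop) : Prop :=
  forall x, U x -> exists r, 0 < r /\ forall y, d x y < r -> U y.

Definition mcompact (K : X -> Prop) : Prop :=
  forall (I : Type) (U : I -> X -> Prop),
    (forall i, mopen (U i)) ->
    (forall x, K x -> exists i, U i x) ->
    exists l : list I, forall x, K x -> exists i, In i l /\ U i x.

Definition proper_space : Prop :=
  forall x r, mcompact (fun y => d x y <= r).

(** Geodesic: any two points are joined by a geodesic segment
    c : [0, d x y] -> X (represented as a function on R). *)
Definition geodesic_space : Prop :=
  forall x y, exists c : R -> X,
    c 0 = x /\ c (d x y) = y /\
    forall s t, 0 <= s <= d x y -> 0 <= t <= d x y ->
      d (c s) (c t) = Rabs (s - t).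

Definition geodesic_ray (a : R -> X) : Prop :=
  forall s t, 0 <= s -> 0 <= t -> d (a s) (a t) = Rabs (s - t).

Definition quasi_geodesic (lam eps : R) (q : R -> X) (a b : R) : Prop :=
  a <= b /\
  forall s t, a <= s <= b -> a <= t <= b ->
    / lam * Rabs (s - t) - eps <= d (q s) (q t) /\
    d (q s) (q t) <= lam * Rabs (s - t) + eps.

Definition morse_gauge (N : R -> R -> R) : Prop :=
  forall lam eps, 1 <= lam -> 0 <= eps -> 0 <= N lam eps.

Definition N_Morse_ray (N : R -> R -> R) (a : R -> X) : Prop :=
  forall lam eps (q : R -> X) (s0 s1 u v : R),
    1 <= lam -> 0 <= eps ->
    quasi_geodesic lam eps q s0 s1 ->
    0 <= u -> 0 <= v -> q s0 = a u -> q s1 = a v ->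
    forall t, s0 <= t <= s1 ->
      exists w, 0 <= w /\ d (q t) (a w) <= N lam eps.

Definition Morse_ray (a : R -> X) : Prop :=
  geodesic_ray a /\ exists N, morse_gauge N /\ N_Morse_ray N a.

(** Finite Hausdorff distance between the images of two rays:
    the relation defining points of the Morse boundary. *)
Definition ray_equiv (a b : R -> X) : Prop :=
  exists C, (forall s, 0 <= s -> exists t, 0 <= t /\ d (a s) (b t) <= C) /\
            (forall t, 0 <= t -> exists s, 0 <= s /\ d (a s) (b t) <= C).

Definition isometry (g ginv : X -> X) : Prop :=
  (forall x y, d (g x) (g y) = d x y) /\
  (forall x, g (ginv x) = x) /\ (forall x, ginv (g x) = x).

Definition fixes_boundary_point (g : X -> X) (a : R -> X) : Prop :=
  Morse_ray a /\ ray_equiv (fun t => g (a t)) a.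

End MetricDefs.

Definition gpow {X : Type} (g ginv : X -> X) (n : Z) : X -> X :=
  match n with
  | Z0 => fun x => x
  | Zpos p => Nat.iter (Pos.to_nat p) g
  | Zneg p => Nat.iter (Pos.to_nat p) ginv
  end.

Definition infinite_order {X : Type} (g ginv : X -> X) : Prop :=
  forall n : Z, n <> 0%Z -> exists x, gpow g ginv n x <> x.

Definition cyclic_acts_properly {X : Type} (d : X -> X -> R)
  (g ginv : X -> X) : Prop :=
  forall K : X -> Prop, mcompact d K ->
    exists l : list Z, forall n : Z,
      (exists x, K x /\ K (gpow g ginv n x)) -> In n l.

(* Main.v *)
Require Import Defs.
From Stdlib Require Import Reals List Lra Classical.
Open Scope R_scope.

Lemma lip_cont (f : R -> R) (x : R) :
  (forall a b, Rabs (f a - f b) <= Rabs (a - b)) -> continuity_pt f x.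
Proof.
  intros Hf eps Heps. exists eps. split; [lra|].
  intros y [_ Hy]. simpl in *. unfold R_dist in *.
  eapply Rle_lt_trans; [apply Hf|]. exact Hy.
Qed.

Ltac rabs := repeat (match goal with
 | |- context [Rabs ?x] => let H := fresh in destruct (Rcase_abs x) as [H|H];
      [rewrite (Rabs_left x H) | rewrite (Rabs_right x H)]
 | H0 : context [Rabs ?x] |- _ => let H := fresh in destruct (Rcase_abs x) as [H|H];
      [rewrite (Rabs_left x H) in H0 | rewrite (Rabs_right x H) in H0]
 end).

Lemma Rabs_le_iff a b : Rabs a <= b <-> (-b <= a /\ a <= b).
Proof. split; intros H; rabs; lra. Qed.

Lemma Rabs_sub_le a b : a <= b -> Rabs (a - b) = b - a.
Proof. intros; rewrite Rabs_minus_sym, Rabs_pos_eq; lra. Qed.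
Lemma Rabs_sub_ge a b : b <= a -> Rabs (a - b) = a - b.
Proof. intros; rewrite Rabs_pos_eq; lra. Qed.

Section Metric.
Context {X : Type} (d : X -> X -> R) (Hm : is_metric d).

Lemma d_refl x : d x x = 0.
Proof. destruct Hm as [H _]. apply H. reflexivity. Qed.
Lemma d_sym x y : d x y = d y x.
Proof. destruct Hm as [_ [H _]]. apply H. Qed.
Lemma d_tri x y z : d x z <= d x y + d y z.
Proof. destruct Hm as [_ [_ H]]. apply H. Qed.
Lemma d_pos x y : 0 <= d x y.
Proof. pose proof (d_tri x y x). rewrite d_refl, (d_sym y x) in H. lra. Qed.
Lemma d_zero x y : d x y = 0 -> x = y.
Proof. destruct Hm as [H _]. apply H. Qed.
Lemma d_rev x y z : d x z - d y z <= d x y.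
Proof. pose proof (d_tri x y z). lra. Qed.

Definition geod (c : R -> X) (L : R) :=
  0 <= L /\ forall s t, 0 <= s <= L -> 0 <= t <= L -> d (c s) (c t) = Rabs (s - t).

Lemma seg_exists (Hg : geodesic_space d) x y :
  exists c, c 0 = x /\ c (d x y) = y /\ geod c (d x y).
Proof.
  destruct (Hg x y) as [c [H0 [H1 H2]]]. exists c. repeat split; auto.
  apply d_pos.
Qed.

Definition clamp (a b t : R) := Rmax a (Rmin b t).

Lemma clamp_lip a b s t : a <= b -> Rabs (clamp a b s - clamp a b t) <= Rabs (s - t).
Proof.
  intros Hab. unfold clamp, Rmax, Rmin.
  repeat (destruct Rle_dec); rabs; lra.
Qed.

Lemma clamp_id a b t : a <= t <= b -> clamp a b t = t.
Proof. intros H. unfold clamp, Rmax, Rmin. repeat destruct Rle_dec; lra. Qed.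
Lemma clamp_in a b t : a <= b -> a <= clamp a b t <= b.
Proof. intros H. unfold clamp, Rmax, Rmin. repeat destruct Rle_dec; lra. Qed.

Lemma closest_seg (c : R -> X) L z : geod c L ->
  exists w, 0 <= w <= L /\ forall w', 0 <= w' <= L -> d z (c w) <= d z (c w').
Proof.
  intros [HL Hc].
  set (f t := d z (c (clamp 0 L t))).
  assert (Hlip : forall a b, Rabs (f a - f b) <= Rabs (a - b)).
  { intros a b. unfold f. apply Rabs_le_iff.
    pose proof (clamp_in 0 L a HL). pose proof (clamp_in 0 L b HL).
    pose proof (Hc _ _ H H0) as E. pose proof (clamp_lip 0 L a b HL) as Hl.
    pose proof (d_tri z (c (clamp 0 L b)) (c (clamp 0 L a))).
    pose proof (d_tri z (c (clamp 0 L a)) (c (clamp 0 L b))).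
    rewrite (d_sym (c (clamp 0 L b))) in H1. rewrite E in H1, H2. split; lra. }
  destruct (continuity_ab_min f 0 L HL (fun c _ => lip_cont f c Hlip)) as [m [Hm1 Hm2]].
  exists m. split; auto. intros w' Hw'. pose proof (Hm1 w' Hw'). unfold f in H.
  rewrite !clamp_id in H by lra. exact H.
Qed.

Lemma closest_ray (a : R -> X) z : geodesic_ray d a ->
  exists v, 0 <= v /\ forall s, 0 <= s -> d z (a v) <= d z (a s).
Proof.
  intros Ha. set (B := 2 * d z (a 0) + 1).
  assert (HB : 0 <= B) by (pose proof (d_pos z (a 0)); unfold B; lra).
  destruct (closest_seg a B z) as [v [Hv1 Hv2]].
  { split; auto. intros; apply Ha; lra. }
  exists v. split; [lra|]. intros s Hs.
  destruct (Rle_dec s B). apply Hv2; lra.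
  pose proof (Hv2 0 (conj (Rle_refl 0) HB)).
  pose proof (d_tri (a 0) z (a s)). rewrite (Ha 0 s) in H0 by lra.
  rewrite Rabs_sub_le in H0 by lra. rewrite d_sym in H0. unfold B in n. lra.
Qed.

End Metric.
Section QG.
Context {X : Type} (d : X -> X -> R) (Hm : is_metric d).

Definition Lip (q : R -> X) a b := forall s t, a <= s <= b -> a <= t <= b ->
  d (q s) (q t) <= Rabs (s - t).
Definition LB lam eps (q : R -> X) a b := forall s t, a <= s <= b -> a <= t <= b ->
  / lam * Rabs (s - t) - eps <= d (q s) (q t).

Lemma qg_of lam eps q a b : 1 <= lam -> 0 <= eps -> a <= b -> Lip q a b ->
  LB lam eps q a b -> quasi_geodesic d lam eps q a b.
Proof.
  intros Hl He Hab HL HB. split; auto. intros s t Hs Ht. split; auto.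
  pose proof (HL s t Hs Ht). pose proof (Rabs_pos (s - t)).
  assert (Rabs (s - t) <= lam * Rabs (s - t)) by nra. lra.
Qed.

Lemma LB_mono lam eps lam' eps' q a b : 1 <= lam -> lam <= lam' -> eps <= eps' ->
  LB lam eps q a b -> LB lam' eps' q a b.
Proof.
  intros H1 H2 H3 HB s t Hs Ht. pose proof (HB s t Hs Ht).
  assert (/ lam' <= / lam) by (apply Rinv_le_contravar; lra).
  pose proof (Rabs_pos (s - t)).
  assert (/ lam' * Rabs (s - t) <= / lam * Rabs (s - t)) by (apply Rmult_le_compat_r; lra).
  lra.
Qed.

Lemma geod_Lip c L : geod d c L -> Lip c 0 L.
Proof. intros [_ H] s t Hs Ht. rewrite H; auto; lra. Qed.

Lemma geod_LB lam c L : 1 <= lam -> geod d c L -> LB lam 0 c 0 L.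
Proof.
  intros Hl [_ H] s t Hs Ht. rewrite H; auto.
  assert (0 < / lam <= 1). { split. apply Rinv_0_lt_compat; lra.
    rewrite <- Rinv_1. apply Rinv_le_contravar; lra. }
  pose proof (Rabs_pos (s - t)). nra.
Qed.

Definition concat (q1 : R -> X) L1 (q2 : R -> X) (t : R) : X :=
  if Rle_dec t L1 then q1 t else q2 (t - L1).

Lemma concat_l q1 L1 q2 t : t <= L1 -> concat q1 L1 q2 t = q1 t.
Proof. intros; unfold concat; destruct Rle_dec; auto; lra. Qed.

Lemma concat_r q1 L1 q2 t : L1 <= t -> q1 L1 = q2 0 -> concat q1 L1 q2 t = q2 (t - L1).
Proof. intros H J; unfold concat; destruct Rle_dec; auto.
  replace t with L1 by lra. rewrite J. f_equal. lra. Qed.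

Lemma concat_Lip q1 L1 q2 L2 : 0 <= L1 -> 0 <= L2 -> Lip q1 0 L1 -> Lip q2 0 L2 ->
  q1 L1 = q2 0 -> Lip (concat q1 L1 q2) 0 (L1 + L2).
Proof.
  intros H1 H2 HL1 HL2 J.
  assert (K : forall s t, 0 <= s <= L1 -> L1 < t <= L1 + L2 ->
     d (q1 s) (q2 (t - L1)) <= Rabs (s - t)).
  { intros s t Hs Ht. pose proof (d_tri d Hm (q1 s) (q1 L1) (q2 (t - L1))).
    pose proof (HL1 s L1 Hs (conj H1 (Rle_refl _))).
    pose proof (HL2 0 (t - L1) (conj (Rle_refl 0) H2) ltac:(lra)). rewrite <- J in H3.
    rabs; lra. }
  intros s t Hs Ht. unfold concat.
  destruct (Rle_dec s L1); destruct (Rle_dec t L1).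
  - apply HL1; lra.
  - apply K; lra.
  - rewrite (d_sym d Hm). rewrite Rabs_minus_sym. apply K; lra.
  - replace (s - t) with ((s - L1) - (t - L1)) by ring. apply HL2; lra.
Qed.

Lemma concat_LB lam eps q1 L1 q2 L2 : 0 <= L1 -> 0 <= L2 ->
  LB lam eps q1 0 L1 -> LB lam eps q2 0 L2 ->
  (forall t1 t2, 0 <= t1 <= L1 -> 0 <= t2 <= L2 ->
     / lam * ((L1 - t1) + t2) - eps <= d (q1 t1) (q2 t2)) ->
  LB lam eps (concat q1 L1 q2) 0 (L1 + L2).
Proof.
  intros H1 H2 HB1 HB2 HC s t Hs Ht. unfold concat.
  destruct (Rle_dec s L1); destruct (Rle_dec t L1).
  - apply HB1; lra.
  - rewrite Rabs_sub_le by lra. replace (t - s) with ((L1 - s) + (t - L1)) by ring.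
    apply HC; lra.
  - rewrite (d_sym d Hm). rewrite Rabs_sub_ge by lra.
    replace (s - t) with ((L1 - t) + (s - L1)) by ring. apply HC; lra.
  - replace (s - t) with ((s - L1) - (t - L1)) by ring. apply HB2; lra.
Qed.

Definition pre a (x : X) (q : R -> X) t := if Rlt_dec t a then x else q t.
Definition post b (y : X) (q : R -> X) t := if Rle_dec t b then q t else y.

Lemma qg_pre lam eps q a b x J : 1 <= lam -> 0 <= eps -> quasi_geodesic d lam eps q a b ->
  d x (q a) <= J -> quasi_geodesic d lam (eps + J + 1) (pre a x q) (a - 1) b.
Proof.
  intros Hl He [Hab Hq] HJ. split; [lra|].
  assert (Hil : 0 < / lam <= 1). { split. apply Rinv_0_lt_compat; lra.
    rewrite <- Rinv_1. apply Rinv_le_contravar; lra. }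
  assert (K : forall s t, a - 1 <= s < a -> a <= t <= b ->
     / lam * Rabs (s - t) - (eps + J + 1) <= d x (q t) /\
     d x (q t) <= lam * Rabs (s - t) + (eps + J + 1)).
  { intros s t Hs Ht. destruct (Hq a t (conj (Rle_refl a) Hab) Ht) as [L U].
    pose proof (d_tri d Hm x (q a) (q t)). pose proof (d_tri d Hm (q a) x (q t)).
    rewrite (d_sym d Hm (q a) x) in H0.
    assert (Rabs (s - t) <= Rabs (a - t) + 1 \/ True) by (right; auto).
    rewrite (Rabs_sub_le s t) by lra. rewrite (Rabs_sub_le a t) in L, U by lra.
    pose proof (d_pos d Hm x (q a)).
    assert (/ lam * (t - s) <= / lam * (t - a) + 1).
    { assert (/lam * (t - s) <= / lam * (t - a) + / lam * (a - s)) by lra.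
      assert (/ lam * (a - s) <= / lam * 1) by (apply Rmult_le_compat_l; lra). lra. }
    assert (lam * (t - a) <= lam * (t - s)) by (apply Rmult_le_compat_l; lra).
    split; lra. }
  intros s t Hs Ht. unfold pre.
  destruct (Rlt_dec s a); destruct (Rlt_dec t a).
  - rewrite (d_refl d Hm). split.
    + assert (Rabs (s - t) <= 1) by (rabs; lra).
      assert (/ lam * Rabs (s - t) <= 1 * 1) by (apply Rmult_le_compat; try lra; apply Rabs_pos).
      pose proof (d_pos d Hm x (q a)). lra.
    + pose proof (Rabs_pos (s - t)). pose proof (d_pos d Hm x (q a)).
      assert (0 <= lam * Rabs (s - t)) by (apply Rmult_le_pos; lra). lra.
  - apply K; lra.
  - rewrite (d_sym d Hm). rewrite Rabs_minus_sym. apply K; lra.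
  - pose proof (d_pos d Hm x (q a)). destruct (Hq s t ltac:(lra) ltac:(lra)). lra.
Qed.

Lemma qg_post lam eps q a b y J : 1 <= lam -> 0 <= eps -> quasi_geodesic d lam eps q a b ->
  d (q b) y <= J -> quasi_geodesic d lam (eps + J + 1) (post b y q) a (b + 1).
Proof.
  intros Hl He [Hab Hq] HJ. split; [lra|].
  assert (Hil : 0 < / lam <= 1). { split. apply Rinv_0_lt_compat; lra.
    rewrite <- Rinv_1. apply Rinv_le_contravar; lra. }
  assert (K : forall s t, b < s <= b + 1 -> a <= t <= b ->
     / lam * Rabs (s - t) - (eps + J + 1) <= d y (q t) /\
     d y (q t) <= lam * Rabs (s - t) + (eps + J + 1)).
  { intros s t Hs Ht. destruct (Hq b t (conj Hab (Rle_refl b)) Ht) as [L U].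
    pose proof (d_tri d Hm y (q b) (q t)). pose proof (d_tri d Hm (q b) y (q t)).
    rewrite (d_sym d Hm y (q b)) in H.
    rewrite (Rabs_sub_ge s t) by lra. rewrite (Rabs_sub_ge b t) in L, U by lra.
    pose proof (d_pos d Hm (q b) y).
    assert (/ lam * (s - t) <= / lam * (b - t) + 1).
    { assert (/lam * (s - t) <= / lam * (b - t) + / lam * (s - b)) by lra.
      assert (/ lam * (s - b) <= / lam * 1) by (apply Rmult_le_compat_l; lra). lra. }
    assert (lam * (b - t) <= lam * (s - t)) by (apply Rmult_le_compat_l; lra).
    split; lra. }
  intros s t Hs Ht. unfold post.
  destruct (Rle_dec s b); destruct (Rle_dec t b).
  - pose proof (d_pos d Hm (q b) y). destruct (Hq s t ltac:(lra) ltac:(lra)). lra.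
  - rewrite (d_sym d Hm). rewrite Rabs_minus_sym. apply K; lra.
  - apply K; lra.
  - rewrite (d_refl d Hm). split.
    + assert (Rabs (s - t) <= 1) by (rabs; lra).
      assert (/ lam * Rabs (s - t) <= 1 * 1) by (apply Rmult_le_compat; try lra; apply Rabs_pos).
      pose proof (d_pos d Hm (q b) y). lra.
    + pose proof (Rabs_pos (s - t)). pose proof (d_pos d Hm (q b) y).
      assert (0 <= lam * Rabs (s - t)) by (apply Rmult_le_pos; lra). lra.
Qed.

Lemma pre_l a x q t : t < a -> pre a x q t = x.
Proof. intros; unfold pre; destruct Rlt_dec; auto; lra. Qed.
Lemma pre_r a x q t : a <= t -> pre a x q t = q t.
Proof. intros; unfold pre; destruct Rlt_dec; auto; lra. Qed.
Lemma post_l b y q t : t <= b -> post b y q t = q t.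
Proof. intros; unfold post; destruct Rle_dec; auto; lra. Qed.
Lemma post_r b y q t : b < t -> post b y q t = y.
Proof. intros; unfold post; destruct Rle_dec; auto; lra. Qed.

End QG.
Lemma max3 A B x : 0 <= A -> 0 <= B -> A <= x -> B - A <= x -> / 3 * (A + B) - 0 <= x.
Proof. intros. destruct (Rle_dec B (2*A)); lra. Qed.

Section Geo.
Context {X : Type} (d : X -> X -> R) (Hm : is_metric d) (Hg : geodesic_space d).

Lemma ray_geod a v L : geodesic_ray d a -> 0 <= v -> 0 <= L -> geod d (fun t => a (v + t)) L.
Proof. intros Ha Hv HL. split; auto. intros s t Hs Ht. rewrite Ha by lra. f_equal; ring. Qed.

Lemma ray_geod_rev a U L : geodesic_ray d a -> 0 <= U - L -> 0 <= L -> geod d (fun t => a (U - t)) L.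
Proof. intros Ha Hv HL. split; auto. intros s t Hs Ht. rewrite Ha by lra.
  rewrite Rabs_minus_sym. f_equal; ring. Qed.

Lemma geod_rev c L : geod d c L -> geod d (fun t => c (L - t)) L.
Proof. intros [HL Hc]. split; auto. intros s t Hs Ht. rewrite Hc by lra.
  rewrite Rabs_minus_sym. f_equal; ring. Qed.

Lemma geod_sub c L w0 w1 : geod d c L -> 0 <= w0 <= w1 -> w1 <= L ->
  geod d (fun t => c (w0 + t)) (w1 - w0).
Proof. intros [HL Hc] H1 H2. split; [lra|]. intros s t Hs Ht. rewrite Hc by lra. f_equal; ring. Qed.

Lemma geod_sub_rev c L w0 w1 : geod d c L -> 0 <= w0 <= w1 -> w1 <= L ->
  geod d (fun t => c (w1 - t)) (w1 - w0).
Proof. intros [HL Hc] H1 H2. split; [lra|]. intros s t Hs Ht. rewrite Hc by lra.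
  rewrite Rabs_minus_sym. f_equal; ring. Qed.

Lemma concat_end (q1 q2 : R -> X) L1 L2 : q1 L1 = q2 0 -> 0 <= L2 ->
  concat q1 L1 q2 (L1 + L2) = q2 L2.
Proof. intros J H. rewrite concat_r by (auto; lra). f_equal; ring. Qed.

Lemma proj_bound (c : R -> X) (P : R -> Prop) w z (e : R -> X) h :
  P w -> (forall w', P w' -> d z (c w) <= d z (c w')) ->
  (forall w', P w' -> d (c w') (c w) = Rabs (w' - w)) ->
  e 0 = c w -> e h = z -> geod d e h ->
  forall w' r, P w' -> 0 <= r <= h ->
    r <= d (c w') (e r) /\ Rabs (w' - w) - r <= d (c w') (e r).
Proof.
  intros Pw Hcl Hc E0 Eh [Hh He] w' r Pw' Hr.
  assert (Hzr : d z (e r) = h - r).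
  { rewrite <- Eh. rewrite He by lra. rabs; lra. }
  assert (Hzw : d z (c w) = h).
  { rewrite <- Eh, <- E0. rewrite He by lra. rabs; lra. }
  assert (Hwr : d (c w) (e r) = r).
  { rewrite <- E0. rewrite He by lra. rabs; lra. }
  split.
  - pose proof (Hcl w' Pw'). pose proof (d_tri d Hm z (e r) (c w')).
    rewrite (d_sym d Hm (e r) (c w')) in H0. lra.
  - pose proof (d_tri d Hm (c w') (e r) (c w)). rewrite (Hc w' Pw') in H.
    rewrite (d_sym d Hm (e r) (c w)) in H. lra.
Qed.

Lemma iso_d f fi : isometry d f fi -> forall x y, d (f x) (f y) = d x y.
Proof. intros [H _]; auto. Qed.
Lemma iso_di f fi : isometry d f fi -> forall x y, d (fi x) (fi y) = d x y.
Proof. intros [H [H1 H2]] x y. rewrite <- (H (fi x) (fi y)). rewrite !H1. auto. Qed.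

Lemma morse_iso N r f fi : isometry d f fi -> N_Morse_ray d N r ->
  N_Morse_ray d N (fun t => f (r t)).
Proof.
  intros Hi HM lam eps q s0 s1 u v Hl He [Hab Hq] Hu Hv E0 E1 t Ht.
  destruct Hi as [Hf [Hfi Hif]].
  assert (Hd : forall x y, d (fi x) (fi y) = d x y) by (apply (iso_di f fi); split; auto).
  destruct (HM lam eps (fun t => fi (q t)) s0 s1 u v Hl He) with (t := t) as [w [Hw Hw']]; auto.
  - split; auto. intros s t' Hs Ht'. rewrite Hd. auto.
  - simpl. rewrite E0; auto.
  - simpl. rewrite E1; auto.
  - exists w. split; auto. rewrite <- (Hfi (q t)). rewrite Hf. auto.
Qed.

Lemma ray_iso r f fi : isometry d f fi -> geodesic_ray d r -> geodesic_ray d (fun t => f (r t)).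
Proof. intros Hi Hr s t Hs Ht. rewrite (iso_d f fi Hi). auto. Qed.

Lemma gauge_nonneg N l e : morse_gauge N -> 1 <= l -> 0 <= e -> 0 <= N l e.
Proof. intros H; apply H. Qed.

Lemma stepB N (be al : R -> X) : morse_gauge N -> N_Morse_ray d N be ->
  geodesic_ray d al -> geodesic_ray d be -> ray_equiv d al be ->
  forall v, 0 <= v -> (forall s, 0 <= s -> d (be 0) (al v) <= d (be 0) (al s)) ->
  forall u, v <= u -> exists tau, 0 <= tau /\ d (al u) (be tau) <= N 3 0.
Proof.
  intros HN HM Hal Hbe [C [HC1 HC2]] v Hv Hcl u Hu.
  assert (HC : 0 <= C). { destruct (HC1 0 (Rle_refl 0)) as [t [_ Ht]].
    pose proof (d_pos d Hm (al 0) (be t)). lra. }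
  set (h0 := d (be 0) (al v)). set (D0 := d (al 0) (be 0)).
  assert (Hh0 : 0 <= h0) by apply (d_pos d Hm).
  assert (HD0 : 0 <= D0) by apply (d_pos d Hm).
  set (s' := u + v + 2 * (h0 + C) + D0 + C + 1).
  set (z := be s').
  destruct (closest_ray d Hm al z Hal) as [U [HU HUcl]].
  set (h1 := d z (al U)).
  assert (Hh1 : 0 <= h1) by apply (d_pos d Hm).
  assert (Hh1C : h1 <= C).
  { destruct (HC2 s') as [s0 [Hs0 Hd]]. unfold s'. lra.
    pose proof (HUcl s0 Hs0). fold z in Hd. rewrite (d_sym d Hm) in Hd. fold h1 in H. lra. }
  assert (HUb : U >= s' - D0 - C).
  { pose proof (d_tri d Hm (al 0) (al U) z). rewrite Hal in H by lra.
    rewrite (d_sym d Hm (al U) z) in H. fold h1 in H.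
    pose proof (d_tri d Hm (be 0) (al 0) z). rewrite (d_sym d Hm (be 0) (al 0)) in H0.
    fold D0 in H0. unfold z in H0. rewrite Hbe in H0 by (unfold s'; lra).
    unfold z in H. rewrite Rabs_sub_le in H0, H by (unfold s'; lra). lra. }
  set (L2 := U - v).
  assert (HL2 : L2 >= 2 * (h0 + h1) /\ L2 >= u - v).
  { unfold L2. unfold s' in HUb. lra. }
  destruct (seg_exists d Hm Hg (be 0) (al v)) as [c1 [c10 [c1L Hc1]]]. fold h0 in c1L, Hc1.
  destruct (seg_exists d Hm Hg (al U) z) as [c3 [c30 [c3L Hc3]]].
  rewrite (d_sym d Hm (al U) z) in c3L, Hc3. fold h1 in c3L, Hc3.
  set (p2 := fun t => al (v + t)).
  assert (Hp2 : geod d p2 L2) by (apply ray_geod; auto; lra).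
  set (Q1 := concat c1 h0 p2).
  set (Q := concat Q1 (h0 + L2) c3).
  assert (J1 : c1 h0 = p2 0) by (rewrite c1L; unfold p2; f_equal; ring).
  assert (J2 : Q1 (h0 + L2) = c3 0).
  { unfold Q1. rewrite concat_end by (auto; lra). rewrite c30. unfold p2, L2.
    f_equal; ring. }
  assert (Hqg : quasi_geodesic d 3 0 Q 0 (h0 + L2 + h1)).
  { apply qg_of; try lra.
    - unfold Q. apply (concat_Lip d Hm); try lra. unfold Q1. apply (concat_Lip d Hm); try lra.
      apply geod_Lip; auto. apply geod_Lip; auto. auto. apply geod_Lip; auto. auto.
    - unfold Q. apply (concat_LB d Hm); try lra.
      + unfold Q1. apply (concat_LB d Hm); try lra.
        * apply geod_LB; auto; lra.
        * apply geod_LB; auto; lra.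
        * intros t1 t2 Ht1 Ht2.
          pose proof (proj_bound al (fun s => 0 <= s) v (be 0) (fun r => c1 (h0 - r)) h0 Hv
             (fun w' H => Hcl w' H) (fun w' H => Hal w' v H Hv)) as PB.
          assert (E1 : c1 (h0 - 0) = al v) by (replace (h0 - 0) with h0 by ring; auto).
          assert (E2 : c1 (h0 - h0) = be 0) by (replace (h0 - h0) with 0 by ring; auto).
          destruct (PB E1 E2 (geod_rev c1 h0 Hc1) (v + t2) (h0 - t1)) as [B1 B2]; simpl; try lra.
          simpl in B1, B2. replace (h0 - (h0 - t1)) with t1 in B1, B2 by ring.
          rewrite Rabs_sub_ge in B2 by lra.
          rewrite (d_sym d Hm). unfold p2. apply max3; lra.
      + apply geod_LB; auto; lra.
      + intros t t3 Ht Ht3.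
        destruct (Rle_dec t h0).
        * unfold Q1. rewrite concat_l by auto.
          destruct Hc1 as [_ Hc1']. destruct Hc3 as [_ Hc3'].
          pose proof (d_tri d Hm (al v) (c1 t) (al U)).
          pose proof (d_tri d Hm (c1 t) (c3 t3) (al U)).
          assert (d (al v) (c1 t) = h0 - t).
          { rewrite <- c1L. rewrite (d_sym d Hm). rewrite Hc1' by lra. rabs; lra. }
          assert (d (c3 t3) (al U) = t3).
          { rewrite <- c30. rewrite Hc3' by lra. rabs; lra. }
          rewrite Hal in H by lra. rewrite Rabs_sub_le in H by (unfold L2 in HL2; lra).
          unfold L2 in *. lra.
        * unfold Q1. rewrite concat_r by (auto; lra). unfold p2.
          pose proof (proj_bound al (fun s => 0 <= s) U z c3 h1 HU
             (fun w' H => HUcl w' H) (fun w' H => Hal w' U H HU) c30 c3L Hc3) as PB.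
          destruct (PB (v + (t - h0)) t3) as [B1 B2]; try lra.
          rewrite Rabs_sub_le in B2 by (unfold L2 in *; lra).
          replace (h0 + L2 - t + t3) with (t3 + (h0 + L2 - t)) by ring.
          apply max3; unfold L2 in *; lra. }
  destruct (HM 3 0 Q 0 (h0 + L2 + h1) 0 s') with (t := h0 + (u - v)) as [w [Hw Hdw]];
    try lra; try exact Hqg.
  - unfold s'; lra.
  - unfold Q. rewrite concat_l by lra. unfold Q1. rewrite concat_l by lra. auto.
  - unfold Q. rewrite concat_end by (auto; lra). auto.
  - exists w. split; auto.
    unfold Q in Hdw. rewrite concat_l in Hdw by (unfold L2 in *; lra).
    unfold Q1 in Hdw. rewrite concat_r in Hdw by (auto; lra). unfold p2 in Hdw.
    replace (v + (h0 + (u - v) - h0)) with u in Hdw by ring. auto.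
Qed.

End Geo.
Section Geo2.
Context {X : Type} (d : X -> X -> R) (Hm : is_metric d) (Hg : geodesic_space d).

Lemma cont_cover (G P : R -> X) a b J n s0 s1 : geodesic_ray d G -> a <= b ->
  (forall t t', a <= t <= b -> a <= t' <= b -> d (P t) (P t') <= Rabs (t - t') + J) ->
  (forall t, a <= t <= b -> exists w, 0 <= w /\ d (P t) (G w) <= n) ->
  P a = G s0 -> P b = G s1 -> 0 <= s0 <= s1 ->
  forall s, s0 <= s <= s1 -> exists t, a <= t <= b /\ d (G s) (P t) <= 3 * n + J + 2.
Proof.
  intros HG Hab HL Hcov Pa Pb Hs01 s Hs.
  set (S t := a <= t <= b /\ exists w, 0 <= w <= s /\ d (P t) (G w) <= n).
  assert (Sa : S a).
  { split; [lra|]. exists s0. split; [lra|]. rewrite Pa, (d_refl d Hm).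
    destruct (Hcov a) as [w [_ Hw]]; [lra|]. pose proof (d_pos d Hm (P a) (G w)). lra. }
  assert (Hn : 0 <= n). { destruct (Hcov a) as [w [_ Hw]]; [lra|].
    pose proof (d_pos d Hm (P a) (G w)). lra. }
  assert (HJ : 0 <= J). { pose proof (HL a a ltac:(lra) ltac:(lra)).
    rewrite (d_refl d Hm) in H. replace (a - a) with 0 in H by ring. rewrite Rabs_R0 in H. lra. }
  destruct (completeness S) as [ts [Hub Hlub]].
  { exists b. intros t [Ht _]. lra. }
  { exists a; auto. }
  assert (Hts : a <= ts <= b).
  { split. apply Hub; auto. apply Hlub. intros t [Ht _]. lra. }
  assert (Ht1 : exists t1, S t1 /\ ts - 1/2 < t1).
  { apply NNPP. intros Hno. assert (is_upper_bound S (ts - 1/2)).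
    { intros t St. destruct (Rle_dec t (ts - 1/2)); auto. exfalso. apply Hno. exists t.
      split; auto; lra. }
    pose proof (Hlub _ H). lra. }
  destruct Ht1 as [t1 [St1 Ht1]].
  assert (t1 <= ts) by (apply Hub; auto).
  destruct St1 as [Ht1r [w1 [Hw1 Hdw1]]].
  set (t2 := Rmin (ts + 1/2) b).
  assert (Ht2 : ts <= t2 <= ts + 1/2 /\ t2 <= b).
  { unfold t2, Rmin. destruct Rle_dec; lra. }
  destruct (classic (S t2)) as [St2 | nSt2].
  - assert (t2 <= ts) by (apply Hub; auto).
    assert (Eb : t2 = b). { unfold t2 in *. unfold Rmin in *. destruct Rle_dec; lra. }
    destruct St2 as [_ [w [Hw Hdw]]]. rewrite Eb, Pb in Hdw.
    rewrite HG in Hdw by lra. exists b. split; [lra|]. rewrite Pb. rewrite HG by lra.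
    rabs; lra.
  - destruct (Hcov t2) as [w2 [Hw2 Hdw2]]; [lra|].
    assert (w2 > s).
    { destruct (Rle_dec w2 s); [|lra]. exfalso. apply nSt2. split; [lra|]. exists w2.
      split; auto; lra. }
    pose proof (HL t1 t2 ltac:(lra) ltac:(lra)).
    assert (Rabs (t1 - t2) <= 1) by (rabs; lra).
    pose proof (d_tri d Hm (G w1) (P t1) (G w2)).
    pose proof (d_tri d Hm (P t1) (P t2) (G w2)).
    rewrite (d_sym d Hm (G w1) (P t1)) in H3. rewrite HG in H3 by lra.
    exists t1. split; [lra|].
    pose proof (d_tri d Hm (G s) (G w1) (P t1)). rewrite HG in H5 by lra.
    rewrite (d_sym d Hm (G w1) (P t1)) in H5.
    rabs; lra.
Qed.

Lemma closeE N a b : morse_gauge N -> N_Morse_ray d N b -> geodesic_ray d a ->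
  geodesic_ray d b -> forall rho,
  (forall t, 0 <= t -> exists w, 0 <= w /\ d (b t) (a w) <= rho) -> ray_equiv d a b.
Proof.
  intros HN HM Ha Hb rho Hc.
  assert (Hrho : 0 <= rho). { destruct (Hc 0) as [w [_ H]]; [lra|].
    pose proof (d_pos d Hm (b 0) (a w)). lra. }
  set (D := d (b 0) (a 0)).
  assert (HD : 0 <= D) by apply (d_pos d Hm).
  set (C := Rmax rho (N 1 (D + 1 + rho + 1))).
  exists C. split.
  - intros s Hs.
    destruct (Hc (s + D + rho)) as [w [Hw Hdw]]; [lra|].
    assert (Hws : s <= w).
    { pose proof (d_tri d Hm (b 0) (a 0) (a w)). pose proof (d_tri d Hm (b 0) (a w) (b (s + D + rho))).
      rewrite Ha in H by lra. rewrite Hb in H0 by lra. fold D in H.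
      rewrite (d_sym d Hm (a w)) in H0. rabs; lra. }
    set (q := post w (b (s + D + rho)) (pre 0 (b 0) a)).
    assert (Hq : quasi_geodesic d 1 (0 + D + 1 + rho + 1) q (0 - 1) (w + 1)).
    { apply (qg_post d Hm); try lra.
      apply (qg_pre d Hm); try lra.
      apply qg_of; try lra.
      - intros x y Hx Hy. rewrite Ha by lra. lra.
      - intros x y Hx Hy. rewrite Ha by lra. rewrite Rinv_1. lra.
      - unfold D; apply Rle_refl.
      - unfold pre. destruct Rlt_dec; [lra|]. rewrite (d_sym d Hm). auto. }
    destruct (HM 1 (0 + D + 1 + rho + 1) q (0 - 1) (w + 1) 0 (s + D + rho)) with (t := s)
      as [t [Ht Hdt]]; try lra; auto.
    + unfold q. rewrite post_l by lra. rewrite pre_l by lra. auto.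
    + unfold q. rewrite post_r by lra. auto.
    + exists t. split; auto. unfold q in Hdt. rewrite post_l, pre_r in Hdt by lra.
      unfold C. eapply Rle_trans; [|apply Rmax_r]. replace (D + 1 + rho + 1) with
        (0 + D + 1 + rho + 1) by ring. auto.
  - intros t Ht. destruct (Hc t Ht) as [w [Hw Hdw]]. exists w. split; auto.
    rewrite (d_sym d Hm). unfold C. eapply Rle_trans; [|apply Rmax_l]. auto.
Qed.

Lemma far_point N a b : morse_gauge N -> N_Morse_ray d N b -> geodesic_ray d a ->
  geodesic_ray d b -> ~ ray_equiv d a b -> forall rho,
  exists t0, 0 <= t0 /\ forall w, 0 <= w -> rho < d (b t0) (a w).
Proof.
  intros HN HM Ha Hb Hne rho. apply NNPP. intros H. apply Hne.
  apply (closeE N a b HN HM Ha Hb rho). intros t Ht. apply NNPP. intros H2.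
  apply H. exists t. split; auto. intros w Hw. apply Rnot_le_lt. intros H3. apply H2.
  exists w. auto.
Qed.

Lemma not_near (a A : R -> X) v K : geodesic_ray d a -> geodesic_ray d A -> 0 <= v ->
  (forall s, 0 <= s -> d (A 0) (a v) <= d (A 0) (a s)) ->
  (forall u, v <= u -> exists tau, 0 <= tau /\ d (a u) (A tau) <= K) ->
  forall rho s tau, 0 <= s <= v -> 0 <= tau -> d (a s) (A tau) <= rho ->
  v - s <= 2 * rho + 4 * K.
Proof.
  intros Ha HA Hv Hcl SB rho s tau Hs Htau Hd.
  destruct (SB v (Rle_refl v)) as [ta [Hta Hdta]].
  set (h := d (A 0) (a v)).
  assert (HK : 0 <= K) by (pose proof (d_pos d Hm (a v) (A ta)); lra).
  assert (Hrho : 0 <= rho) by (pose proof (d_pos d Hm (a s) (A tau)); lra).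
  assert (Hta_h : Rabs (ta - h) <= K).
  { pose proof (d_tri d Hm (A 0) (A ta) (a v)). pose proof (d_tri d Hm (A 0) (a v) (A ta)).
    rewrite HA in H, H0 by lra. rewrite (d_sym d Hm (A ta) (a v)) in H. fold h in H, H0.
    rabs; lra. }
  set (D := v - s).
  destruct (Rle_dec tau ta).
  - pose proof (Hcl s (proj1 Hs)). fold h in H.
    pose proof (d_tri d Hm (A 0) (A tau) (a s)). rewrite HA in H0 by lra.
    rewrite (d_sym d Hm (A tau) (a s)) in H0.
    pose proof (d_tri d Hm (a v) (A ta) (a s)). pose proof (d_tri d Hm (A ta) (A tau) (a s)).
    rewrite Ha in H1 by lra. rewrite HA in H2 by lra.
    rewrite (d_sym d Hm (A tau) (a s)) in H2.
    unfold D. rabs; lra.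
  - destruct (SB (v + D)) as [tu [Htu Hdtu]]; [unfold D; lra|].
    assert (HD : 0 <= D) by (unfold D; lra).
    assert (T4 : forall x y z w, d x w <= d x y + d y z + d z w).
    { intros. pose proof (d_tri d Hm x y w). pose proof (d_tri d Hm y z w). lra. }
    assert (Hdta' : d (A ta) (a v) <= K) by (rewrite (d_sym d Hm); auto).
    assert (Hdtu' : d (A tu) (a (v + D)) <= K) by (rewrite (d_sym d Hm); auto).
    assert (Hd' : d (A tau) (a s) <= rho) by (rewrite (d_sym d Hm); auto).
    assert (F1 : h - K <= tu).
    { pose proof (Hcl (v + D) ltac:(unfold D; lra)). fold h in H.
      pose proof (d_tri d Hm (A 0) (A tu) (a (v + D))). rewrite HA in H0 by lra. rabs; lra. }
    assert (F2 : D - 2 * K <= Rabs (tu - ta)).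
    { pose proof (T4 (a (v + D)) (A tu) (A ta) (a v)). rewrite Ha in H by (unfold D; lra).
      rewrite HA in H by lra. replace (v + D - v) with D in H by ring. rabs; lra. }
    assert (F3 : Rabs (tu - ta) <= D + 2 * K).
    { pose proof (T4 (A tu) (a (v + D)) (a v) (A ta)). rewrite Ha in H by (unfold D; lra).
      rewrite HA in H by lra. replace (v + D - v) with D in H by ring. rabs; lra. }
    assert (F4 : D - rho - K <= Rabs (tau - ta)).
    { pose proof (T4 (a s) (A tau) (A ta) (a v)). rewrite Ha in H by lra.
      rewrite HA in H by lra. unfold D. rabs; lra. }
    assert (F5 : Rabs (tau - ta) <= D + rho + K).
    { pose proof (T4 (A tau) (a s) (a v) (A ta)). rewrite Ha in H by lra.
      rewrite HA in H by lra. unfold D. rabs; lra. }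
    assert (F6 : 2 * D - K - rho <= Rabs (tu - tau)).
    { pose proof (T4 (a (v + D)) (A tu) (A tau) (a s)). rewrite Ha in H by (unfold D; lra).
      rewrite HA in H by lra. unfold D in *. rabs; lra. }
    unfold D in *. rabs; lra.
Qed.

End Geo2.
Definition TTK2 (N : R -> R -> R) D1 := 3 * N 3 (0 + D1 + 1) + D1 + 2.
Definition TT1 (N : R -> R -> R) D1 := TTK2 N D1 + D1.
Definition TT2 (N : R -> R -> R) D1 D2 K := TTK2 N D1 + N 3 (0 + D2 + 1 + K + 1).

Section Geo3.
Context {X : Type} (d : X -> X -> R) (Hm : is_metric d) (Hg : geodesic_space d).

Lemma geod_restrict c L L' : geod d c L -> 0 <= L' <= L -> geod d c L'.
Proof. intros [HL Hc] H. split; [lra|]. intros; apply Hc; lra. Qed.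

Lemma TT N (G B sig : R -> X) Ls sv tB K D1 D2 :
  morse_gauge N -> N_Morse_ray d N G -> N_Morse_ray d N B -> geodesic_ray d G ->
  geodesic_ray d B -> geod d sig Ls -> 0 <= sv -> 0 <= tB -> d (G sv) (B tB) <= K ->
  d (G 0) (sig 0) <= D1 -> d (B 0) (sig Ls) <= D2 ->
  forall s, 0 <= s <= sv ->
  (exists om, 0 <= om <= Ls /\ d (G s) (sig om) <= TT1 N D1) \/
  (exists tau, 0 <= tau /\ d (G s) (B tau) <= TT2 N D1 D2 K).
Proof.
  intros HN HMG HMB HG HB Hsig Hsv HtB HK HD1 HD2 s Hs.
  assert (HD1p : 0 <= D1) by (pose proof (d_pos d Hm (G 0) (sig 0)); lra).
  assert (HD2p : 0 <= D2) by (pose proof (d_pos d Hm (B 0) (sig Ls)); lra).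
  assert (HKp : 0 <= K) by (pose proof (d_pos d Hm (G sv) (B tB)); lra).
  assert (HLs : 0 <= Ls) by (destruct Hsig; auto).
  set (z := G sv).
  destruct (closest_seg d Hm sig Ls z Hsig) as [om [Hom Hcl]].
  set (h := d (sig om) z).
  destruct (seg_exists d Hm Hg (sig om) z) as [e [e0 [eh He]]]. fold h in eh, He.
  assert (Hh : 0 <= h) by (destruct He; auto).
  assert (PB := proj_bound d Hm sig (fun x => 0 <= x <= Ls) om z e h Hom Hcl
     (fun w' H => proj2 Hsig w' om H Hom) e0 eh He).
  set (I1 := concat sig om e).
  assert (J1 : sig om = e 0) by auto.
  assert (HI1 : quasi_geodesic d 3 0 I1 0 (om + h)).
  { apply qg_of; try lra.
    - apply (concat_Lip d Hm); try lra; auto. apply geod_Lip. apply (geod_restrict _ Ls); auto; lra.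
      apply geod_Lip; auto.
    - apply (concat_LB d Hm); try lra.
      + apply geod_LB; try lra. apply (geod_restrict _ Ls); auto; lra.
      + apply geod_LB; auto; lra.
      + intros t1 t2 Ht1 Ht2. destruct (PB t1 t2) as [B1 B2]; try (simpl; lra).
        rewrite Rabs_sub_le in B2 by lra. replace (om - t1 + t2) with (t2 + (om - t1)) by ring.
        apply max3; lra. }
  set (P1 := pre 0 (G 0) I1).
  assert (HP1 : quasi_geodesic d 3 (0 + D1 + 1) P1 (0 - 1) (om + h)).
  { apply (qg_pre d Hm); try lra; auto. unfold I1. rewrite concat_l by lra. auto. }
  assert (P1a : P1 (0 - 1) = G 0) by (unfold P1; rewrite pre_l by lra; auto).
  assert (P1b : P1 (om + h) = G sv).
  { unfold P1. rewrite pre_r by lra. unfold I1. rewrite concat_end by auto. auto. }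
  assert (Hcov : forall t, 0 - 1 <= t <= om + h -> exists w, 0 <= w /\ d (P1 t) (G w) <= N 3 (0 + D1 + 1)).
  { intros t Ht. apply (HMG 3 (0 + D1 + 1) P1 (0 - 1) (om + h) 0 sv); try lra; auto. }
  assert (HLip1 : forall t t', 0 - 1 <= t <= om + h -> 0 - 1 <= t' <= om + h ->
            d (P1 t) (P1 t') <= Rabs (t - t') + D1).
  { assert (LI : Lip d I1 0 (om + h)).
    { apply (concat_Lip d Hm); try lra; auto. apply geod_Lip. apply (geod_restrict _ Ls); auto; lra.
      apply geod_Lip; auto. }
    assert (K1 : forall t t', t < 0 -> 0 <= t' <= om + h -> d (G 0) (I1 t') <= Rabs (t - t') + D1).
    { intros t t' Ht Ht'. pose proof (d_tri d Hm (G 0) (I1 0) (I1 t')).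
      pose proof (LI 0 t' ltac:(lra) Ht').
      assert (I0 : I1 0 = sig 0) by (unfold I1; rewrite concat_l by lra; auto).
      rewrite I0 in H, H0. rabs; lra. }
    intros t t' Ht Ht'. unfold P1, pre.
    destruct (Rlt_dec t 0); destruct (Rlt_dec t' 0).
    - rewrite (d_refl d Hm). pose proof (Rabs_pos (t - t')). lra.
    - apply K1; lra.
    - rewrite (d_sym d Hm), Rabs_minus_sym. apply K1; lra.
    - pose proof (LI t t' ltac:(lra) ltac:(lra)). lra. }
  destruct (cont_cover d Hm G P1 (0 - 1) (om + h) D1 (N 3 (0 + D1 + 1)) 0 sv HG
     ltac:(lra) HLip1 Hcov P1a P1b ltac:(lra) s ltac:(lra)) as [t [Ht Hdt]].
  fold (TTK2 N D1) in Hdt.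
  destruct (Rlt_dec t 0).
  - left. exists 0. split; [lra|]. unfold P1 in Hdt. rewrite pre_l in Hdt by lra.
    pose proof (d_tri d Hm (G s) (G 0) (sig 0)). unfold TT1. lra.
  - destruct (Rle_dec t om).
    + left. exists t. split; [lra|]. unfold P1 in Hdt. rewrite pre_r in Hdt by lra.
      unfold I1 in Hdt. rewrite concat_l in Hdt by lra. unfold TT1. lra.
    + right.
      set (sr := fun t => sig (Ls - t)).
      set (I2 := concat sr (Ls - om) e).
      assert (J2 : sr (Ls - om) = e 0) by (unfold sr; rewrite e0; f_equal; ring).
      assert (Hsr : geod d sr (Ls - om)) by (apply (geod_sub_rev d sig Ls om Ls); auto; lra).
      assert (HI2 : quasi_geodesic d 3 0 I2 0 (Ls - om + h)).
      { apply qg_of; try lra.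
        - apply (concat_Lip d Hm); try lra; auto; apply geod_Lip; auto.
        - apply (concat_LB d Hm); try lra.
          + apply geod_LB; auto; lra.
          + apply geod_LB; auto; lra.
          + intros t1 t2 Ht1 Ht2. destruct (PB (Ls - t1) t2) as [B1 B2]; try (simpl; lra).
            rewrite Rabs_sub_ge in B2 by lra. unfold sr.
            replace (Ls - om - t1 + t2) with (t2 + (Ls - om - t1)) by ring.
            apply max3; lra. }
      set (P2 := post (Ls - om + h) (B tB) (pre 0 (B 0) I2)).
      assert (HP2 : quasi_geodesic d 3 (0 + D2 + 1 + K + 1) P2 (0 - 1) (Ls - om + h + 1)).
      { apply (qg_post d Hm); try lra.
        - apply (qg_pre d Hm); try lra; auto. unfold I2. rewrite concat_l by lra. unfold sr.
          replace (Ls - 0) with Ls by ring. auto.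
        - rewrite pre_r by lra. unfold I2. rewrite concat_end by auto. rewrite eh. auto. }
      destruct (HMB 3 (0 + D2 + 1 + K + 1) P2 (0 - 1) (Ls - om + h + 1) 0 tB)
        with (t := Ls - om + (t - om)) as [w [Hw Hdw]]; try lra; auto.
      * unfold P2. rewrite post_l by lra. rewrite pre_l by lra. auto.
      * unfold P2. rewrite post_r by lra. auto.
      * exists w. split; auto.
        unfold P2 in Hdw. rewrite post_l in Hdw by lra. rewrite pre_r in Hdw by lra.
        unfold I2 in Hdw. rewrite concat_r in Hdw by (auto; lra).
        replace (Ls - om + (t - om) - (Ls - om)) with (t - om) in Hdw by ring.
        unfold P1 in Hdt. rewrite pre_r in Hdt by lra. unfold I1 in Hdt.
        rewrite concat_r in Hdt by (auto; lra).
        pose proof (d_tri d Hm (G s) (e (t - om)) (B w)). unfold TT2. lra.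
Qed.

End Geo3.
Definition VQc (N : R -> R -> R) D := 2 * TT2 N D D (N 3 0) + 4 * N 3 0 + 1.
Definition VQ (N : R -> R -> R) D t0 := t0 + VQc N D + D + TT1 N D.

Section Geo4.
Context {X : Type} (d : X -> X -> R) (Hm : is_metric d) (Hg : geodesic_space d).

Lemma req_sym (a b : R -> X) : ray_equiv d a b -> ray_equiv d b a.
Proof. intros [C [H1 H2]]. exists C. split.
  - intros s Hs. destruct (H2 s Hs) as [t [Ht Hd]]. exists t. split; auto. rewrite (d_sym d Hm). auto.
  - intros t Ht. destruct (H1 t Ht) as [s [Hs Hd]]. exists s. split; auto. rewrite (d_sym d Hm). auto.
Qed.

Definition cfg (K : R) (r R0 : R -> X) (v tr : R) :=
  0 <= v /\ 0 <= tr /\ (forall s, 0 <= s -> d (R0 0) (r v) <= d (R0 0) (r s)) /\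
  (forall u, v <= u -> exists tau, 0 <= tau /\ d (r u) (R0 tau) <= K) /\ d (r v) (R0 tr) <= K.

Lemma cfg_exists N (r R0 : R -> X) : morse_gauge N -> N_Morse_ray d N R0 -> geodesic_ray d r ->
  geodesic_ray d R0 -> ray_equiv d r R0 -> exists v tr, cfg (N 3 0) r R0 v tr.
Proof.
  intros HN HM Hr HR He.
  destruct (closest_ray d Hm r (R0 0) Hr) as [v [Hv Hcl]].
  pose proof (stepB d Hm Hg N R0 r HN HM Hr HR He v Hv Hcl) as SB.
  destruct (SB v (Rle_refl v)) as [tr [Htr Hd]].
  exists v, tr. repeat split; auto.
Qed.

Lemma lemQ N (a b A B : R -> X) va vb ta tb D t0 :
  morse_gauge N -> N_Morse_ray d N a -> N_Morse_ray d N b -> N_Morse_ray d N A ->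
  N_Morse_ray d N B -> geodesic_ray d a -> geodesic_ray d b -> geodesic_ray d A ->
  geodesic_ray d B -> cfg (N 3 0) a A va ta -> cfg (N 3 0) b B vb tb ->
  d (b 0) (a 0) <= D -> d (B 0) (A 0) <= D -> 0 <= t0 ->
  (forall w, 0 <= w -> 3 * TT1 N D < d (b t0) (a w)) ->
  va <= VQ N D t0 \/ vb <= VQ N D t0.
Proof.
  intros HN Ha Hb HA HB Ga Gb GA GB [Hva [Hta [Hcla [SBa Hda]]]] [Hvb [Htb [Hclb [SBb Hdb]]]]
    HD1 HD2 Ht0 Hfar.
  set (K := N 3 0) in *.
  set (M1 := TT1 N D). set (M2 := TT2 N D D K).
  assert (HDp : 0 <= D) by (pose proof (d_pos d Hm (b 0) (a 0)); lra).
  assert (HKp : 0 <= K) by (pose proof (d_pos d Hm (a va) (A ta)); lra).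
  assert (HM1 : 0 <= M1).
  { unfold M1, TT1, TTK2. pose proof (HN 3 (0 + D + 1) ltac:(lra) ltac:(lra)). lra. }
  assert (HM2 : 0 <= M2).
  { unfold M2, TT2, TTK2. pose proof (HN 3 (0 + D + 1) ltac:(lra) ltac:(lra)).
    pose proof (HN 3 (0 + D + 1 + K + 1) ltac:(lra) ltac:(lra)). lra. }
  destruct (Rle_dec va (VQ N D t0)) as [?|Hva']; [left; auto|].
  destruct (Rle_dec vb (VQ N D t0)) as [?|Hvb']; [right; auto|].
  exfalso.
  unfold VQ, VQc in Hva', Hvb'. fold K M2 M1 in Hva', Hvb'.
  destruct (seg_exists d Hm Hg (a 0) (A 0)) as [sig [s0 [sL Hsig]]].
  set (Ls := d (a 0) (A 0)) in *.
  assert (HLs : 0 <= Ls) by (destruct Hsig; auto).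
  destruct (TT d Hm Hg N b B sig Ls vb tb K D D HN Hb HB Gb GB Hsig Hvb Htb Hdb)
    with (s := t0) as [[psi [Hpsi Hdpsi]] | [tau [Htau Hdtau]]].
  { rewrite s0. auto. } { rewrite sL. auto. } { lra. }
  2:{ pose proof (not_near d Hm b B vb K Gb GB Hvb Hclb SBb M2 t0 tau ltac:(lra) Htau Hdtau).
      lra. }
  fold M1 in Hdpsi.
  assert (Hpsi_le : psi <= D + t0 + M1).
  { destruct Hsig as [_ Hsg]. pose proof (Hsg 0 psi ltac:(lra) Hpsi). rewrite s0 in H.
    pose proof (d_tri d Hm (a 0) (b 0) (sig psi)).
    pose proof (d_tri d Hm (b 0) (b t0) (sig psi)). rewrite Gb in H1 by lra.
    rewrite (d_sym d Hm (a 0) (b 0)) in H0. rabs; lra. }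
  destruct (TT d Hm Hg N a A sig Ls va ta K D D HN Ha HA Ga GA Hsig Hva Hta Hda)
    with (s := psi) as [[phi [Hphi Hdphi]] | [tau [Htau Hdtau]]].
  { rewrite s0, (d_refl d Hm). auto. } { rewrite sL, (d_refl d Hm). auto. } { lra. }
  2:{ pose proof (not_near d Hm a A va K Ga GA Hva Hcla SBa M2 psi tau ltac:(lra) Htau Hdtau).
      lra. }
  fold M1 in Hdphi.
  destruct Hsig as [_ Hsg].
  assert (E1 : Rabs (phi - psi) <= M1).
  { pose proof (Hsg 0 phi ltac:(lra) Hphi). rewrite s0 in H.
    pose proof (d_tri d Hm (a 0) (a psi) (sig phi)). pose proof (d_tri d Hm (a 0) (sig phi) (a psi)).
    rewrite Ga in H0, H1 by lra. rewrite (d_sym d Hm (sig phi) (a psi)) in H1.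
    rabs; lra. }
  pose proof (Hsg psi phi Hpsi Hphi).
  pose proof (d_tri d Hm (b t0) (sig psi) (a psi)).
  pose proof (d_tri d Hm (sig psi) (sig phi) (a psi)).
  pose proof (Hfar psi ltac:(lra)). fold M1 in H2.
  rewrite (d_sym d Hm (sig phi) (a psi)) in H1. rewrite Rabs_minus_sym in H. lra.
Qed.

Lemma lemP N (a b : R -> X) f fi va vb ta tb D V t1 :
  morse_gauge N -> N_Morse_ray d N a -> geodesic_ray d a -> geodesic_ray d b ->
  isometry d f fi ->
  cfg (N 3 0) a (fun t => f (a t)) va ta -> cfg (N 3 0) b (fun t => f (b t)) vb tb ->
  va <= V -> vb <= V -> d (b 0) (a 0) <= D -> 0 <= t1 ->
  (forall w, 0 <= w -> N 1 (0 + D + 1 + (2 * N 3 0 + 2 * V + D) + 1) < d (b t1) (a w)) ->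
  d (f (b 0)) (b 0) <= 2 * D + t1 + N 3 0 + V.
Proof.
  intros HN Ha Ga Gb Hi [Hva [Hta [Hcla [SBa Hda]]]] [Hvb [Htb [Hclb [SBb Hdb]]]]
    HvaV HvbV HD Ht1 Hfar.
  set (K := N 3 0) in *. set (JP := 2 * K + 2 * V + D) in *.
  assert (HD0 : 0 <= D) by (pose proof (d_pos d Hm (b 0) (a 0)); lra).
  set (A := fun t => f (a t)). set (B := fun t => f (b t)).
  assert (HMA : N_Morse_ray d N A) by (apply (morse_iso d N a f fi); auto).
  assert (GA : geodesic_ray d A) by (apply (ray_iso d a f fi); auto).
  assert (GB : geodesic_ray d B) by (apply (ray_iso d b f fi); auto).
  assert (HDAB : d (A 0) (B 0) <= D).
  { unfold A, B. rewrite (iso_d d f fi Hi). rewrite (d_sym d Hm). auto. }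
  assert (HJ : d (B tb) (A ta) <= JP).
  { pose proof (d_tri d Hm (B tb) (b vb) (A ta)).
    pose proof (d_tri d Hm (b vb) (b 0) (A ta)).
    pose proof (d_tri d Hm (b 0) (a 0) (A ta)).
    pose proof (d_tri d Hm (a 0) (a va) (A ta)).
    rewrite Gb in H0 by lra. rewrite Ga in H2 by lra.
    rewrite (d_sym d Hm (B tb) (b vb)) in H. unfold A, B in *.
    unfold JP. rabs; lra. }
  destruct (Rlt_dec tb t1) as [Hlt | Hge].
  - assert (E : d (f (b 0)) (f (b tb)) = tb)
      by (change (d (B 0) (B tb) = tb); rewrite GB by lra; rabs; lra).
    pose proof (d_tri d Hm (f (b 0)) (f (b tb)) (b 0)).
    pose proof (d_tri d Hm (f (b tb)) (b vb) (b 0)). rewrite Gb in H0 by lra.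
    rewrite (d_sym d Hm (f (b tb)) (b vb)) in H0.
    assert (0 <= D) by (pose proof (d_pos d Hm (b 0) (a 0)); lra).
    rabs; lra.
  - exfalso.
    set (q := post tb (A ta) (pre 0 (A 0) B)).
    assert (Hq : quasi_geodesic d 1 (0 + D + 1 + JP + 1) q (0 - 1) (tb + 1)).
    { apply (qg_post d Hm); [lra | lra | | rewrite pre_r by lra; auto].
      apply (qg_pre d Hm); [lra | lra | | auto].
      apply qg_of; [lra|lra|lra| |].
      * intros x y Hx Hy. rewrite GB by lra. lra.
      * intros x y Hx Hy. rewrite GB by lra. rewrite Rinv_1. lra. }
    destruct (HMA 1 (0 + D + 1 + JP + 1) q (0 - 1) (tb + 1) 0 ta) with (t := t1)
      as [w [Hw Hdw]]; try lra; auto.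
    + pose proof (d_pos d Hm (A 0) (B 0)). pose proof (d_pos d Hm (B tb) (A ta)). lra.
    + unfold q. rewrite post_l by lra. rewrite pre_l by lra. auto.
    + unfold q. rewrite post_r by lra. auto.
    + unfold q in Hdw. rewrite post_l in Hdw by lra. rewrite pre_r in Hdw by lra.
      unfold A, B in Hdw. rewrite (iso_d d f fi Hi) in Hdw.
      pose proof (Hfar w Hw). lra.
Qed.

End Geo4.
From Stdlib Require Import ZArith Lia.

Lemma list_Z_bound (l : list Z) : exists m, forall z, In z l -> (z < m)%Z.
Proof.
  induction l as [|a l [m Hm]].
  - exists 0%Z. intros z [].
  - exists (Z.max (a + 1) m). intros z [H|H]. subst; lia. specialize (Hm z H). lia.
Qed.

Lemma list_Z_notall (l : list Z) : exists p, ~ In (Zpos p) l.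
Proof.
  destruct (list_Z_bound l) as [m Hm]. exists (Z.to_pos (Z.max m 1)). intros H.
  specialize (Hm _ H). rewrite Z2Pos.id in Hm by lia. lia.
Qed.

Lemma VQ_mono N D t t' : t <= t' -> VQ N D t <= VQ N D t'.
Proof. unfold VQ. lra. Qed.

Section Geo5.
Context {X : Type} (d : X -> X -> R) (Hm : is_metric d) (Hg : geodesic_space d).

Lemma core N (a b c : R -> X) : morse_gauge N -> N_Morse_ray d N a -> N_Morse_ray d N b ->
  N_Morse_ray d N c -> geodesic_ray d a -> geodesic_ray d b -> geodesic_ray d c ->
  ~ ray_equiv d a b -> ~ ray_equiv d a c -> ~ ray_equiv d b c ->
  exists Rb, forall f fi, isometry d f fi -> ray_equiv d (fun t => f (a t)) a ->
    ray_equiv d (fun t => f (b t)) b -> ray_equiv d (fun t => f (c t)) c ->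
    d (f (a 0)) (a 0) <= Rb.
Proof.
  intros HN Ma Mb Mc Ga Gb Gc Nab Nac Nbc.
  set (K := N 3 0).
  set (D := d (a 0) (b 0) + d (a 0) (c 0) + d (b 0) (c 0)).
  assert (Dba : d (b 0) (a 0) <= D).
  { unfold D. rewrite (d_sym d Hm). pose proof (d_pos d Hm (a 0) (c 0)).
    pose proof (d_pos d Hm (b 0) (c 0)). lra. }
  assert (Dca : d (c 0) (a 0) <= D).
  { unfold D. rewrite (d_sym d Hm). pose proof (d_pos d Hm (a 0) (b 0)).
    pose proof (d_pos d Hm (b 0) (c 0)). lra. }
  assert (Dcb : d (c 0) (b 0) <= D).
  { unfold D. rewrite (d_sym d Hm). pose proof (d_pos d Hm (a 0) (b 0)).
    pose proof (d_pos d Hm (a 0) (c 0)). lra. }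
  assert (HD0 : 0 <= D) by (pose proof (d_pos d Hm (b 0) (a 0)); lra).
  destruct (far_point d Hm N a b HN Mb Ga Gb Nab (3 * TT1 N D)) as [tab [Htab Fab]].
  destruct (far_point d Hm N a c HN Mc Ga Gc Nac (3 * TT1 N D)) as [tac [Htac Fac]].
  destruct (far_point d Hm N b c HN Mc Gb Gc Nbc (3 * TT1 N D)) as [tbc [Htbc Fbc]].
  set (V := VQ N D (tab + tac + tbc)).
  set (rP := N 1 (0 + D + 1 + (2 * N 3 0 + 2 * V + D) + 1)).
  destruct (far_point d Hm N a b HN Mb Ga Gb Nab rP) as [sab [Hsab Pab]].
  destruct (far_point d Hm N a c HN Mc Ga Gc Nac rP) as [sac [Hsac Pac]].
  destruct (far_point d Hm N b c HN Mc Gb Gc Nbc rP) as [sbc [Hsbc Pbc]].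
  exists (4 * D + (sab + sac + sbc) + K + V).
  intros f fi Hi Ea Eb Ec.
  set (A := fun t => f (a t)). set (B := fun t => f (b t)). set (C := fun t => f (c t)).
  assert (MA : N_Morse_ray d N A) by (apply (morse_iso d N a f fi); auto).
  assert (MB : N_Morse_ray d N B) by (apply (morse_iso d N b f fi); auto).
  assert (MC : N_Morse_ray d N C) by (apply (morse_iso d N c f fi); auto).
  assert (GA : geodesic_ray d A) by (apply (ray_iso d a f fi); auto).
  assert (GB : geodesic_ray d B) by (apply (ray_iso d b f fi); auto).
  assert (GC : geodesic_ray d C) by (apply (ray_iso d c f fi); auto).
  destruct (cfg_exists d Hm Hg N a A HN MA Ga GA (req_sym d Hm _ _ Ea)) as [va [ta CA]].
  destruct (cfg_exists d Hm Hg N b B HN MB Gb GB (req_sym d Hm _ _ Eb)) as [vb [tb CB]].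
  destruct (cfg_exists d Hm Hg N c C HN MC Gc GC (req_sym d Hm _ _ Ec)) as [vc [tc CC]].
  assert (DBA : d (B 0) (A 0) <= D) by (unfold A, B; rewrite (iso_d d f fi Hi); auto).
  assert (DCA : d (C 0) (A 0) <= D) by (unfold A, C; rewrite (iso_d d f fi Hi); auto).
  assert (DCB : d (C 0) (B 0) <= D) by (unfold B, C; rewrite (iso_d d f fi Hi); auto).
  assert (Q1 : va <= V \/ vb <= V).
  { destruct (lemQ d Hm Hg N a b A B va vb ta tb D tab HN Ma Mb MA MB Ga Gb GA GB CA CB
      Dba DBA Htab Fab); [left|right]; eapply Rle_trans; eauto; apply VQ_mono; lra. }
  assert (Q2 : va <= V \/ vc <= V).
  { destruct (lemQ d Hm Hg N a c A C va vc ta tc D tac HN Ma Mc MA MC Ga Gc GA GC CA CC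
      Dca DCA Htac Fac); [left|right]; eapply Rle_trans; eauto; apply VQ_mono; lra. }
  assert (Q3 : vb <= V \/ vc <= V).
  { destruct (lemQ d Hm Hg N b c B C vb vc tb tc D tbc HN Mb Mc MB MC Gb Gc GB GC CB CC
      Dcb DCB Htbc Fbc); [left|right]; eapply Rle_trans; eauto; apply VQ_mono; lra. }
  assert (HK : 0 <= K) by (apply HN; lra).
  assert (HV : 0 <= V).
  { unfold V, VQ, VQc, TT2, TT1, TTK2. fold K.
    pose proof (HN 3 (0 + D + 1) ltac:(lra) ltac:(lra)).
    pose proof (HN 3 (0 + D + 1 + K + 1) ltac:(lra) ltac:(lra)). lra. }
  assert (Tb : forall r2 : R -> X, d (r2 0) (a 0) <= D -> forall s,
     d (f (r2 0)) (r2 0) <= 2 * D + s + K + V -> 0 <= s -> s <= sab + sac + sbc ->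
     d (f (a 0)) (a 0) <= 4 * D + (sab + sac + sbc) + K + V).
  { intros r2 H1 s H2 H3 H4. pose proof (d_tri d Hm (f (a 0)) (f (r2 0)) (a 0)).
    pose proof (d_tri d Hm (f (r2 0)) (r2 0) (a 0)). rewrite (iso_d d f fi Hi) in H.
    rewrite (d_sym d Hm (a 0) (r2 0)) in H. lra. }
  destruct (Rle_dec va V); destruct (Rle_dec vb V).
  - apply (Tb b Dba sab); try lra.
    apply (lemP d Hm N a b f fi va vb ta tb D V sab HN Ma Ga Gb Hi CA CB); auto.
  - destruct Q3 as [Q3|Q3]; [lra|].
    apply (Tb c Dca sac); try lra.
    apply (lemP d Hm N a c f fi va vc ta tc D V sac HN Ma Ga Gc Hi CA CC); auto.
  - destruct Q2 as [Q2|Q2]; [lra|].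
    apply (Tb c Dca sbc); try lra.
    apply (lemP d Hm N b c f fi vb vc tb tc D V sbc HN Mb Gb Gc Hi CB CC); auto.
  - destruct Q1 as [Q1|Q1]; lra.
Qed.

End Geo5.
Section Iter.
Context {X : Type} (d : X -> X -> R) (Hm : is_metric d).

Lemma req_refl (r : R -> X) : ray_equiv d r r.
Proof. exists 0. split; intros s Hs; exists s; split; auto; rewrite (d_refl d Hm); lra. Qed.

Lemma req_trans (x y z : R -> X) : ray_equiv d x y -> ray_equiv d y z -> ray_equiv d x z.
Proof.
  intros [C1 [H1 H2]] [C2 [K1 K2]]. exists (C1 + C2). split.
  - intros s Hs. destruct (H1 s Hs) as [t [Ht Hd]]. destruct (K1 t Ht) as [u [Hu Hd']].
    exists u. split; auto. pose proof (d_tri d Hm (x s) (y t) (z u)). lra.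
  - intros u Hu. destruct (K2 u Hu) as [t [Ht Hd]]. destruct (H2 t Ht) as [s [Hs Hd']].
    exists s. split; auto. pose proof (d_tri d Hm (x s) (y t) (z u)). lra.
Qed.

Lemma req_iso g gi (x y : R -> X) : isometry d g gi -> ray_equiv d x y ->
  ray_equiv d (fun t => g (x t)) (fun t => g (y t)).
Proof.
  intros Hi [C [H1 H2]]. exists C. split.
  - intros s Hs. destruct (H1 s Hs) as [t [Ht Hd]]. exists t. split; auto.
    rewrite (iso_d d g gi Hi). auto.
  - intros t Ht. destruct (H2 t Ht) as [s [Hs Hd]]. exists s. split; auto.
    rewrite (iso_d d g gi Hi). auto.
Qed.

Lemma iter_iso g gi k : isometry d g gi -> isometry d (Nat.iter k g) (Nat.iter k gi).
Proof.
  intros [H1 [H2 H3]]. split; [|split].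
  - induction k; intros x y; simpl; auto. rewrite H1; auto.
  - induction k; intros x; auto. rewrite (Nat.iter_succ_r k X gi x), (Nat.iter_succ k X g).
    rewrite IHk. auto.
  - induction k; intros x; auto. rewrite (Nat.iter_succ_r k X g x), (Nat.iter_succ k X gi).
    rewrite IHk. auto.
Qed.

Lemma iter_equiv g gi (r : R -> X) : isometry d g gi -> ray_equiv d (fun t => g (r t)) r ->
  forall k, ray_equiv d (fun t => Nat.iter k g (r t)) r.
Proof.
  intros Hi He k. induction k.
  - simpl. apply req_refl.
  - simpl. eapply req_trans; [|exact He]. apply (req_iso g gi); auto.
Qed.

Lemma morse_mono (N1 N : R -> R -> R) (r : R -> X) : N_Morse_ray d N1 r ->
  (forall l e, 1 <= l -> 0 <= e -> N1 l e <= N l e) -> N_Morse_ray d N r.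
Proof.
  intros HM Hle lam eps q s0 s1 u v Hl He Hq Hu Hv E0 E1 t Ht.
  destruct (HM lam eps q s0 s1 u v Hl He Hq Hu Hv E0 E1 t Ht) as [w [Hw Hd]].
  exists w. split; auto. pose proof (Hle lam eps Hl He). lra.
Qed.

End Iter.

Theorem lemma4p4 (X : Type) (d : X -> X -> R) (g ginv : X -> X) :
  is_metric d -> proper_space d -> geodesic_space d ->
  isometry d g ginv -> infinite_order g ginv ->
  cyclic_acts_properly d g ginv ->
  forall a1 a2 a3 : R -> X,
    fixes_boundary_point d g a1 ->
    fixes_boundary_point d g a2 ->
    fixes_boundary_point d g a3 ->
    ray_equiv d a1 a2 \/ ray_equiv d a1 a3 \/ ray_equiv d a2 a3.
Proof.
  intros Hm Hp Hg Hi _ Hpr a1 a2 a3 [[G1 [N1 [HN1 M1]]] E1] [[G2 [N2 [HN2 M2]]] E2]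
    [[G3 [N3 [HN3 M3]]] E3].
  apply NNPP. intros Hno.
  assert (N12 : ~ ray_equiv d a1 a2) by tauto.
  assert (N13 : ~ ray_equiv d a1 a3) by tauto.
  assert (N23 : ~ ray_equiv d a2 a3) by tauto.
  set (N := fun l e => Rmax (N1 l e) (Rmax (N2 l e) (N3 l e))).
  assert (HN : morse_gauge N).
  { intros l e Hl He. unfold N. pose proof (HN1 l e Hl He).
    pose proof (Rmax_l (N1 l e) (Rmax (N2 l e) (N3 l e))). lra. }
  assert (M1' : N_Morse_ray d N a1).
  { apply (morse_mono d N1); auto. intros. unfold N. apply Rmax_l. }
  assert (M2' : N_Morse_ray d N a2).
  { apply (morse_mono d N2); auto. intros. unfold N.
    eapply Rle_trans; [|apply Rmax_r]. apply Rmax_l. }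
  assert (M3' : N_Morse_ray d N a3).
  { apply (morse_mono d N3); auto. intros. unfold N.
    eapply Rle_trans; [|apply Rmax_r]. apply Rmax_r. }
  destruct (core d Hm Hg N a1 a2 a3 HN M1' M2' M3' G1 G2 G3 N12 N13 N23) as [Rb HRb].
  assert (Hk : forall k, d (Nat.iter k g (a1 0)) (a1 0) <= Rb).
  { intros k. apply (HRb (Nat.iter k g) (Nat.iter k ginv)).
    - apply iter_iso; auto.
    - apply (iter_equiv d Hm g ginv); auto.
    - apply (iter_equiv d Hm g ginv); auto.
    - apply (iter_equiv d Hm g ginv); auto. }
  assert (HR0 : 0 <= Rb) by (pose proof (Hk 0%nat); simpl in H; rewrite (d_refl d Hm) in H; auto).
  destruct (Hpr (fun y => d (a1 0) y <= Rb) (Hp (a1 0) Rb)) as [l Hl].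
  destruct (list_Z_notall l) as [p Hp'].
  apply Hp'. apply Hl. exists (a1 0). split.
  - rewrite (d_refl d Hm). auto.
  - simpl. rewrite (d_sym d Hm). apply Hk.
Qed.
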